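(* Let $c=\log(1/\epsilon)$, $C=[0,c]^m$, $C_{c/2}=[-c/2,3c/2]^m$, and define $$g'(x)=\begin{cases}g\big(\Pi_C(x)\big)\Big(1-\frac{2d_\infty(x,C)}{c}\Big),&x\in C_{c/2},\\0,&x\notin C_{c/2},\end{cases}$$ where $\Pi_C(x)$ is the Euclidean projection of $x$ onto $C$ and $d_\infty(x,C)=\inf_{y\in C}\|x-y\|_\infty$. Then $g'$ is bounded, Lipschitz, has compact support, and $g'(x)=g(x)$ for all $x\in C$. Furthermore, if $V'$ is the viscosity solution of $\partial_tV'+H(\nabla_xV')=0$ on $\mathbb R^m\times[0,1)$ with $V'(\cdot,1)=g'$, then $V'(x,t)=0$ for all $t\in[0,1]$ and all $x\notin[-3c/2,3c/2]^m$.
   Context: $\mathcal X$ finite, $\Delta_{\mathcal X}$ the distributions on $\mathcal X$, $\Delta_K$ the simplex on $[K]$, $D$ the KL divergence; $m\ge2$ bandits $\nu^1,\dots,\nu^m$, $\nu^i=(\nu^i_a)_{a\in[K]}$, with $\nu^i_a(x)\ge\epsilon$ for all $i,a,x$, $\epsilon\in(0,1)$. $H(p)=\min_{Q\in(\Delta_{\mathcal X})^K}\max_{w\in\Delta_K}\sum_{i=1}^m\sum_aw(a)D(Q_a\|\nu^i_a)p_i$; $g(x)=\max_{j\in[m]}\min_{i\ne j}x_i$. Viscosity solutions of such terminal-value problems are the values of the zero-sum differential game with dynamics $\dot x_i=\sum_aw(a)D(Q_a\|\nu^i_a)$, maximizer control $w\in\Delta_K$, minimizer control $Q\in(\Delta_{\mathcal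 X})^K$ and payoff equal to the terminal function at the final state. *)

(* Defs.v *)
From HB Require Import structures.
From mathcomp Require Import all_boot all_order all_algebra.
From mathcomp Require Import all_classical all_reals all_analysis.
Unset Printing Implicit Defensive.
Import Order.TTheory GRing.Theory Num.Theory.
Import numFieldNormedType.Exports.
Local Open Scope classical_set_scope.
Local Open Scope ring_scope.

Section Defs.
Context {R : realType}.

Definition is_dist (X : finType) (q : X -> R) : Prop :=
  (forall x, 0 <= q x) /\ \sum_(x : X) q x = 1.

Definition simplexK (K : nat) : set ('I_K -> R) :=
  [set w | is_dist _ w].

Definition distK (X : finType) (K : nat) : set ('I_K -> X -> R) :=
  [set Q | forall a, is_dist X (Q a)].

(* KL divergence D(q || p) = sum_x q(x) ln(q(x)/p(x)) (p > 0 here; the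
   term is 0 when q(x) = 0, matching the convention 0 ln 0 = 0) *)
Definition KL (X : finType) (q p : X -> R) : R :=
  \sum_(x : X) q x * ln (q x / p x).

Definition Ham (X : finType) (K m : nat) (nu : 'I_m -> 'I_K -> X -> R)
  (p : 'rV[R]_m) : R :=
  inf [set sup [set \sum_(i < m) \sum_(a < K) w a * KL X (Q a) (nu i a) * p ord0 i
                | w in simplexK K]
      | Q in distK X K].

Definition gfun (m : nat) (x : 'rV[R]_m) : R :=
  sup [set inf [set x ord0 i | i in [set i : 'I_m | i != j]] | j in [set: 'I_m]].

Definition cubeC (m : nat) (c : R) : set 'rV[R]_m :=
  [set y | forall i, 0 <= y ord0 i <= c].
Definition in_cube_half (m : nat) (c : R) (x : 'rV[R]_m) : bool :=
  [forall i, (- (c / 2) <= x ord0 i <= 3 * c / 2)].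

(* Euclidean projection onto the box [0,c]^m (= coordinatewise clamping) *)
Definition projC (m : nat) (c : R) (x : 'rV[R]_m) : 'rV[R]_m :=
  \row_i Num.min (Num.max (x ord0 i) 0) c.

(* d_oo(x, C) = inf_{y in C} ||x - y||_oo  (the norm on 'rV is the sup norm) *)
Definition dinf (m : nat) (c : R) (x : 'rV[R]_m) : R :=
  inf [set `|x - y| | y in cubeC m c].

Definition gprime (m : nat) (c : R) (x : 'rV[R]_m) : R :=
  if in_cube_half m c x then gfun m (projC m c x) * (1 - 2 * dinf m c x / c) else 0.

(* Viscosity solutions of  d_t V + H(grad_x V) = 0  on R^m x (0,1) with
   V(.,1) = G, for V continuous on R^m x [0,1].  Test functions are
   differentiable functions phi : 'rV_m * R -> R. *)
Definition grad_x (m : nat) (phi : 'rV[R]_m * R -> R) (z : 'rV[R]_m * R)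
  : 'rV[R]_m := \row_i ('d phi z) (delta_mx ord0 i, 0).
Definition d_t (m : nat) (phi : 'rV[R]_m * R -> R) (z : 'rV[R]_m * R) : R :=
  ('d phi z) (0, 1).

Definition viscosity_solution (m : nat) (H : 'rV[R]_m -> R)
  (G : 'rV[R]_m -> R) (V : 'rV[R]_m -> R -> R) : Prop :=
  {within [set z : 'rV[R]_m * R | 0 <= z.2 <= 1],
     continuous (fun z => V z.1 z.2)} /\
  (forall x, V x 1 = G x) /\
  (forall (phi : 'rV[R]_m * R -> R) (z0 : 'rV[R]_m * R),
     (forall z, differentiable phi z) -> 0 < z0.2 < 1 ->
     (\forall z \near z0, V z.1 z.2 - phi z <= V z0.1 z0.2 - phi z0) ->
     d_t m phi z0 + H (grad_x m phi z0) >= 0) /\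
  (forall (phi : 'rV[R]_m * R -> R) (z0 : 'rV[R]_m * R),
     (forall z, differentiable phi z) -> 0 < z0.2 < 1 ->
     (\forall z \near z0, V z.1 z.2 - phi z >= V z0.1 z0.2 - phi z0) ->
     d_t m phi z0 + H (grad_x m phi z0) <= 0).

End Defs.

(* Main.v *)
Require Import Defs.
From HB Require Import structures.
From mathcomp Require Import all_boot all_order all_algebra.
From mathcomp Require Import all_classical all_reals all_analysis.
From mathcomp Require Import ring lra.
Import Order.TTheory GRing.Theory Num.Theory.
Import numFieldNormedType.Exports.
Local Open Scope classical_set_scope.
Local Open Scope ring_scope.
Section S. Variable R : realType. Variable m : nat.
Lemma ent (x : 'rV[R]_m) i : `|x ord0 i| <= `|x|.
Proof. have ->: `|x| = \big[Num.max/0]_ij `|x ij.1 ij.2| by exact: mx_normrE.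
exact: (le_bigmax _ _ (ord0, i)). Qed.
Definition Lf (w : 'rV[R]_m) (s : R) (z : 'rV[R]_m * R) : R :=
  \sum_i w ord0 i * z.1 ord0 i + s * z.2.
Lemma Lf_lin w s : linear (Lf w s).
Proof.
move=> a y z; rewrite /Lf /=.
rewrite (eq_bigr (fun i => a * (w ord0 i * y.1 ord0 i) + w ord0 i * z.1 ord0 i)); last first.
  by move=> i _; rewrite !mxE; ring.
rewrite big_split /= -mulr_sumr. rewrite /GRing.scale /=. ring.
Qed.
HB.instance Definition _ w s := GRing.isLinear.Build R _ R *:%R (Lf w s) (Lf_lin w s).
Lemma Lf_bound w s z : `|Lf w s z| <= (\sum_i `|w ord0 i| + `|s|) * `|z|.
Proof.
rewrite /Lf mulrDl; apply: (le_trans (ler_normD _ _)); apply: lerD.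
  rewrite mulr_suml; apply: (le_trans (ler_norm_sum _ _ _)); apply: ler_sum => i _.
  rewrite normrM; apply: ler_wpM2l => //.
  apply: (le_trans (ent _ _)). by rewrite prod_normE le_max lexx.
rewrite normrM; apply: ler_wpM2l => //; by rewrite prod_normE le_max lexx orbT.
Qed.
Lemma Lf_cont w s : continuous (Lf w s).
Proof.
apply: (@bounded_linear_continuous _ _ _ (Lf w s)).
apply/linear_boundedP.
near=> r => z.
apply: (le_trans (Lf_bound w s z)); apply: ler_wpM2r => //.
Unshelve. all: by end_near. Qed.
Lemma is_diff_Lf w s z : is_diff z (Lf w s) (Lf w s).
Proof.
apply: DiffDef; first exact/linear_differentiable/Lf_cont.
by rewrite diff_lin //; apply: Lf_cont.
Qed.
Lemma is_diff_expR (y : R) : is_diff y expR (fun h => h * expR y).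
Proof.
have dE : differentiable expR y by apply/derivable1_diffP; exact: derivable_expR.
apply: DiffDef => //.
rewrite diff1E //; apply/funext => h; rewrite derive1E.
rewrite /GRing.scale /=; congr (_ * _); exact: (congr1 (fun f => f y) (@derive_expR R)).
Qed.
Definition Tm (lam : R) w s b (z : 'rV[R]_m * R) := lam * expR (Lf w s z + b).
Lemma is_diff_Tm lam w s b z :
  is_diff z (Tm lam w s b) (fun v => lam * expR (Lf w s z + b) * Lf w s v).
Proof.
have h1 : is_diff z (Lf w s + cst b) (Lf w s + 0).
  exact: (is_diffD (is_diff_Lf w s z) (is_diff_cst b z)).
have h2 := is_diff_comp h1 (is_diff_expR ((Lf w s + cst b) z)).
have h3 := @is_diffZ _ _ _ _ _ lam z h2.
have -> : Tm lam w s b = lam *: (expR \o (Lf w s + cst b)) by apply/funext.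
apply: is_diff_eq h3 _; apply/funext => v /=.
rewrite !fctE; rewrite [_ v + _](_ : _ = Lf w s v) ?addr0 //.
change (lam * (Lf w s v * expR (Lf w s z + b)) = lam * expR (Lf w s z + b) * Lf w s v); ring.
Qed.
Lemma is_diff_sum n (f df : 'I_n -> 'rV[R]_m * R -> R) z :
  (forall i, is_diff z (f i) (df i)) -> is_diff z (\sum_i f i) (\sum_i df i).
Proof.
move=> H; apply: (big_rec2 (fun a b => is_diff z a b)).
  exact: is_diff_cst.
by move=> i a b _ hab; apply: is_diffD.
Qed.
Lemma Lf0 s z : Lf 0 s z = s * z.2.
Proof. by rewrite /Lf big1 ?add0r // => i _; rewrite mxE mul0r. Qed.
Lemma Lf_delta a i s z : Lf (a *: delta_mx ord0 i) s z = a * z.1 ord0 i + s * z.2.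
Proof.
rewrite /Lf (bigD1 i) //= big1 ?addr0; first by rewrite !mxE !eqxx mulr1.
by move=> j /negbTE ji; rewrite !mxE ji andbF mulr0 mul0r.
Qed.
Lemma Lf_t w s : Lf w s (0, 1) = s.
Proof. by rewrite /Lf big1 ?add0r ?mulr1 // => i _; rewrite mxE mulr0. Qed.
Lemma Lf_e w s j : Lf w s (delta_mx ord0 j, 0) = w ord0 j.
Proof.
rewrite /Lf mulr0 addr0 (bigD1 j) //= big1 ?addr0; first by rewrite mxE !eqxx mulr1.
by move=> i /negbTE ij; rewrite mxE ij andbF mulr0.
Qed.

Section Psi.
Variables (eta lam mu c t0 : R) (x0 : 'rV[R]_m).
Let e (i : 'I_m) : 'rV[R]_m := delta_mx ord0 i.
Definition psi : 'rV[R]_m * R -> R :=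
  Lf 0 (-eta) + cst eta + Tm lam 0 (-mu) (mu*t0) +
  \sum_i (Tm lam (-mu *: e i) 0 (mu * x0 ord0 i) +
          Tm lam (mu *: e i) (-(mu*c)) (mu*(c*t0 - x0 ord0 i))).
Definition EB (z : 'rV[R]_m * R) := expR (mu * (t0 - z.2)).
Definition EC (z : 'rV[R]_m * R) i := expR (mu * (x0 ord0 i - z.1 ord0 i)).
Definition ED (z : 'rV[R]_m * R) i := expR (mu * (z.1 ord0 i - x0 ord0 i - c * (z.2 - t0))).
Lemma EBE z : expR (Lf 0 (-mu) z + mu*t0) = EB z.
Proof. by rewrite Lf0 /EB; congr expR; ring. Qed.
Lemma ECE z i : expR (Lf (-mu *: e i) 0 z + mu * x0 ord0 i) = EC z i.
Proof. by rewrite Lf_delta /EC; congr expR; ring. Qed.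
Lemma EDE z i : expR (Lf (mu *: e i) (-(mu*c)) z + mu*(c*t0 - x0 ord0 i)) = ED z i.
Proof. by rewrite Lf_delta /ED; congr expR; ring. Qed.
Lemma psiE z : psi z = eta * (1 - z.2) + lam * EB z + \sum_i (lam * EC z i + lam * ED z i).
Proof.
rewrite /psi !fctE fct_sumE /Tm Lf0 EBE; congr (_ + _ + _); first ring.
by apply: eq_bigr => i _; rewrite !fctE ECE EDE.
Qed.
Definition dpsi z v := Lf 0 (-eta) v + lam * EB z * Lf 0 (-mu) v +
  \sum_i (lam * EC z i * Lf (-mu *: e i) 0 v + lam * ED z i * Lf (mu *: e i) (-(mu*c)) v).
Lemma psi_diff z : is_diff z psi (dpsi z).
Proof.
have h := is_diffD (is_diffD (is_diffD (is_diff_Lf 0 (-eta) z) (is_diff_cst eta z))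
   (is_diff_Tm lam 0 (-mu) (mu*t0) z))
   (@is_diff_sum m _ _ z (fun i => is_diffD (is_diff_Tm lam (-mu *: e i) 0 (mu * x0 ord0 i) z)
          (is_diff_Tm lam (mu *: e i) (-(mu*c)) (mu*(c*t0 - x0 ord0 i)) z))).
apply: is_diff_eq h _; apply/funext => v.
rewrite /dpsi !fctE fct_sumE EBE addr0; congr (_ + _ + _).
by apply: eq_bigr => i _; rewrite !fctE ECE EDE.
Qed.
Lemma dpsi_t z : dpsi z (0, 1) = - eta - lam * mu * EB z - \sum_i lam * mu * c * ED z i.
Proof.
rewrite /dpsi !Lf_t.
rewrite (eq_bigr (fun i => - (lam * mu * c * ED z i))); last first.
  by move=> i _; rewrite !Lf_t; ring.
rewrite sumrN; ring.
Qed.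
Lemma dpsi_e z j : dpsi z (delta_mx ord0 j, 0) = lam * mu * ED z j - lam * mu * EC z j.
Proof.
rewrite /dpsi !Lf_e !mxE mulr0 !add0r (bigD1 j) //= big1 ?addr0.
  by rewrite !Lf_e /e !mxE !eqxx !mulr1; ring.
by move=> i /negbTE ij; rewrite !Lf_e /e !mxE eq_sym ij andbF !mulr0 addr0.
Qed.
End Psi.
Lemma compare (c : R) (hc : 0 < c) (Hf : 'rV[R]_m -> R)
  (hH : forall p, Hf p <= c * \sum_i Num.max (p ord0 i) 0)
  (U : 'rV[R]_m -> R -> R)
  (Ucont : {within [set z : 'rV[R]_m * R | 0 <= z.2 <= 1], continuous (fun z => U z.1 z.2)})
  (Usub : forall (phi : 'rV[R]_m * R -> R) (z0 : 'rV[R]_m * R),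
     (forall z, differentiable phi z) -> 0 < z0.2 < 1 ->
     (\forall z \near z0, U z.1 z.2 - phi z <= U z0.1 z0.2 - phi z0) ->
     d_t m phi z0 + Hf (grad_x m phi z0) >= 0)
  (x0 : 'rV[R]_m) (t0 : R) (ht0 : 0 < t0 < 1) (k : 'I_m) (rho0 : R) (hr0 : 0 < rho0)
  (hterm : forall x : 'rV[R]_m, x0 ord0 k - rho0 < x ord0 k < x0 ord0 k + c + rho0 -> U x 1 <= 0) :
  U x0 t0 <= 0.
Proof.
rewrite leNgt; apply/negP => dpos.
set delta := U x0 t0 in dpos.
have [t0p t01] := andP ht0.
pose a := t0 / 2.
have ap : 0 < a by rewrite /a; lra.
pose rho := Num.min rho0 a.
have rhop : 0 < rho by rewrite lt_min hr0 ap.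
have rhoa : rho <= a by rewrite ge_min lexx orbT.
have rhor : rho <= rho0 by rewrite ge_min lexx.
pose D := rho + c + 1.
pose Ai := fun i => `[x0 ord0 i - D, x0 ord0 i + D]%classic.
pose A := [set v : 'rV[R]_m | forall i, Ai i (v ord0 i)].
pose K := A `*` `[a, 1]%classic.
have cK : compact K.
  apply: compact_setX; last exact: segment_compact.
  by apply: rV_compact => i; exact: segment_compact.
have KE z : K z <-> (forall i, `|z.1 ord0 i - x0 ord0 i| <= D) /\ a <= z.2 <= 1.
  rewrite /K /A /Ai /=; split.
    move=> [h1 h2]; split; last by move: h2; rewrite /= in_itv.
    move=> i; have := h1 i; rewrite /= in_itv /= => /andP[h3 h4].
    by rewrite ler_norml; apply/andP; split; lra.
  move=> [h1 h2]; split; last by rewrite /= in_itv.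
  move=> i; have := h1 i; rewrite ler_norml => /andP[h3 h4].
  by rewrite /= in_itv /=; apply/andP; split; lra.
have KS : K `<=` [set z : 'rV[R]_m * R | 0 <= z.2 <= 1].
  move=> z Kz; have [_ /andP[h1 h2]] := (KE z).1 Kz; rewrite /=; apply/andP; split; lra.
set Uf := fun z : 'rV[R]_m * R => U z.1 z.2.
have UK : {within K, continuous Uf} := continuous_subspaceW KS Ucont.
have Dp : 0 < D by rewrite /D; lra.
have K0 : K (x0, t0).
  apply/KE; split; last by rewrite /=; apply/andP; split; rewrite /a; lra.
  by move=> i /=; rewrite subrr normr0 ltW.
have [zM zMK zMmax] := compact_EVT_max (ex_intro _ _ K0) cK UK.
pose M := Num.max (Uf zM) 1.
have UM z : K z -> Uf z <= M.
  by move=> Kz; rewrite le_max zMmax ?orTb // inE.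
have M1 : 1 <= M by rewrite le_max lexx orbT.
pose eta := delta / 4.
pose lam := delta / (4 * (m%:R + 1)).
have lamp : 0 < lam by rewrite /lam divr_gt0 // mulr_gt0 // ltr_wpDl.
have lamE : lam * (4 * (m%:R + 1)) = delta.
  by rewrite /lam mulfVK // mulf_neq0 // lt0r_neq0 // ltr_wpDl.
pose mu := M / (lam * rho).
have mup : 0 < mu by rewrite /mu divr_gt0 ?mulr_gt0 //; lra.
have muE : lam * mu * rho = M.
  by rewrite /mu; field; rewrite !lt0r_neq0.
pose ps := psi eta lam mu c t0 x0.
have hd z : 'd ps z = dpsi eta lam mu c t0 x0 z :> (_ -> R) by case: (psi_diff eta lam mu c t0 x0 z).
have psd z : differentiable ps z by case: (psi_diff eta lam mu c t0 x0 z).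
have psc : continuous ps := fun z => differentiable_continuous (psd z).
have cont2 : {within K, continuous (fun z => Uf z - ps z)}.
  move=> z; apply: continuousB; [exact: UK | exact: (continuous_subspaceT psc)].
have [zs zsK zsmax] := compact_EVT_max (ex_intro _ _ K0) cK cont2.
have Kzs : K zs by move: zsK; rewrite inE.
have [hzs1 /andP[hzs2 hzs3]] := (KE zs).1 Kzs.
have hEB z : 0 < EB mu t0 z by exact: expR_gt0.
have hEC z i : 0 < EC mu x0 z i by exact: expR_gt0.
have hED z i : 0 < ED mu c t0 x0 z i by exact: expR_gt0.
have ps0 : ps (x0, t0) < delta.
  rewrite /ps psiE /EB /EC /ED /= !subrr !mulr0 ?subr0 expR0 !mulr1.
  rewrite (eq_bigr (fun=> lam + lam)); last by move=> i _; rewrite !subrr ?mulr0 ?subr0 ?mulr0 expR0 !mulr1.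
  rewrite sumr_const card_ord -mulr_natr.
  have m0 : 0 <= (m%:R : R) by [].
  rewrite /eta; nra.
have key : 0 < Uf zs - ps zs.
  have := zsmax (x0, t0); rewrite inE => /(_ K0) /=.
  rewrite /Uf /= -/delta => h; lra.
have psnn z : K z -> 0 <= eta * (1 - z.2) /\ 0 <= lam * EB mu t0 z /\
   (forall i, 0 <= lam * EC mu x0 z i /\ 0 <= lam * ED mu c t0 x0 z i).
  move=> /KE [_ /andP[_ h]]; split; first by rewrite mulr_ge0 // ?subr_ge0 // /eta; lra.
  split; first by rewrite mulr_ge0 // ltW.
  by move=> i; rewrite !mulr_ge0 // ltW.
have psM : ps zs < M by have := UM zs Kzs; lra.
have [p1 [p2 p3]] := psnn zs Kzs.
have termB : lam * EB mu t0 zs < M.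
  apply: le_lt_trans psM; rewrite /ps psiE.
  have : 0 <= \sum_i (lam * EC mu x0 zs i + lam * ED mu c t0 x0 zs i).
    by apply: sumr_ge0 => i _; have [] := p3 i; lra.
  lra.
have termCD i : lam * EC mu x0 zs i < M /\ lam * ED mu c t0 x0 zs i < M.
  have : lam * EC mu x0 zs i + lam * ED mu c t0 x0 zs i <= ps zs.
    rewrite /ps psiE (bigD1 i) //=.
    have : 0 <= \sum_(j | j != i) (lam * EC mu x0 zs j + lam * ED mu c t0 x0 zs j).
      by apply: sumr_ge0 => j _; have [] := p3 j; lra.
    lra.
  have [] := p3 i; lra.
have lamexp s0 : lam * expR (mu * s0) < M -> s0 < rho.
  move=> h; rewrite ltNge; apply/negP => hs.
  have h1 := expR_ge1Dx (mu * s0).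
  have h2 : mu * rho <= mu * s0 by rewrite ler_wpM2l // ltW.
  nra.
have hB : t0 - zs.2 < rho by apply: lamexp; exact: termB.
have hC i : x0 ord0 i - zs.1 ord0 i < rho by apply: lamexp; exact: (termCD i).1.
have hD i : zs.1 ord0 i - x0 ord0 i - c * (zs.2 - t0) < rho.
  by apply: lamexp; exact: (termCD i).2.
have aE : a * 2 = t0 by rewrite /a; field.
have hta : a < zs.2 by lra.
have ht1 : zs.2 < 1.
  rewrite lt_neqAle hzs3 andbT; apply/negP => /eqP h1.
  have : U zs.1 1 <= 0.
    apply: hterm; have := hC k; have := hD k; rewrite h1 => h3 h4.
    apply/andP; split; nra.
  have : 0 <= ps zs.
    rewrite /ps psiE.
    have : 0 <= \sum_i (lam * EC mu x0 zs i + lam * ED mu c t0 x0 zs i).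
      by apply: sumr_ge0 => j _; have [] := p3 j; lra.
    lra.
  move: key; rewrite /Uf -h1; lra.
have hx i : `|zs.1 ord0 i - x0 ord0 i| < rho + c.
  rewrite ltr_norml; apply/andP; split.
    by have := hC i; lra.
  by have := hD i; nra.
pose e := Num.min 1 (Num.min (zs.2 - a) (1 - zs.2)).
have ep : 0 < e by rewrite /e !lt_min ltr01 !subr_gt0 hta ht1.
have e1 : e <= 1 by rewrite /e ge_min lexx.
have e2 : e <= zs.2 - a by rewrite /e !ge_min lexx !orbT.
have e3 : e <= 1 - zs.2 by rewrite /e !ge_min lexx !orbT.
have locmax : \forall z \near zs, Uf z - ps z <= Uf zs - ps zs.
  have : \forall z \near zs, `|zs - z| < e.
    exact: (@cvgr_dist_lt _ _ _ (nbhs zs) _ id zs cvg_id e ep).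
  apply: filterS => z hz; apply: zsmax; rewrite inE; apply/KE; split.
    move=> i; have h1 : `|zs.1 ord0 i - z.1 ord0 i| < e.
      apply: le_lt_trans hz; have := ent (zs.1 - z.1) i; rewrite !mxE => h.
      apply: le_trans h _; rewrite prod_normE le_max; apply/orP; left.
      by [].
    have := hx i; rewrite (_ : z.1 ord0 i - x0 ord0 i =
       (zs.1 ord0 i - x0 ord0 i) - (zs.1 ord0 i - z.1 ord0 i)); last by ring.
    move=> h2; apply: (le_trans (ler_normB _ _)); rewrite /D; lra.
  have h1 : `|zs.2 - z.2| < e.
    apply: le_lt_trans hz; rewrite prod_normE le_max; apply/orP; right.
    by [].
  move: h1; rewrite ltr_norml => /andP[h2 h3]; apply/andP; split; lra.
have := Usub ps zs psd (ltac:(apply/andP; split; lra)) locmax.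
rewrite /d_t hd dpsi_t.
set S1 := \sum_i _.
move=> h.
have hH2 := hH (grad_x m ps zs).
have : \sum_i Num.max (grad_x m ps zs ord0 i) 0 <= \sum_i lam * mu * ED mu c t0 x0 zs i.
  apply: ler_sum => i _; rewrite /grad_x mxE hd dpsi_e ge_max; apply/andP; split.
    by have := hEC zs i; nra.
  by have := hED zs i; nra.
move=> hsum.
have hS1 : S1 = c * \sum_i lam * mu * ED mu c t0 x0 zs i.
  by rewrite /S1 mulr_sumr; apply: eq_bigr => i _; ring.
have := hEB zs.
have etap : 0 < eta by rewrite /eta; lra.
move=> hb.
have h3 := ler_wpM2l (ltW hc) hsum.
have h4 : 0 < lam * mu * EB mu t0 zs := mulr_gt0 (mulr_gt0 lamp mup) hb.
move: h hH2 h3 h4 hS1 etap; clear.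
move=> h hH2 h3 h4 hS1 etap; lra.
Qed.
End S.
Section H.
Variables (R : realType) (X : finType) (K m : nat) (hm : (2 <= m)%N) (hK : (0 < K)%N)
  (eps : R) (heps : 0 < eps < 1) (nu : 'I_m -> 'I_K -> X -> R)
  (hnu : forall i a, is_dist X (nu i a)) (hnueps : forall i a x, eps <= nu i a x).
Let c := ln (eps^-1).

Lemma dist_le1 (q : X -> R) x : is_dist X q -> q x <= 1.
Proof.
move=> [h0 h1]; rewrite -h1 (bigD1 x) //= lerDl; exact: sumr_ge0.
Qed.

Lemma KL_le (q p : X -> R) : is_dist X q -> is_dist X p -> (forall x, eps <= p x) ->
  KL X q p <= c.
Proof.
move=> hq hp hpe; have [e0 e1] := andP heps.
have [hq0 hq1] := hq.
rewrite /KL -[c]mul1r -hq1 mulr_suml; apply: ler_sum => x _.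
have := hq0 x; rewrite le_eqVlt => /orP[/eqP <-|qp]; first by rewrite !mul0r.
apply: ler_wpM2l; first exact: ltW.
have px : 0 < p x by apply: lt_le_trans (hpe x).
rewrite /c ler_ln ?posrE ?divr_gt0 ?invr_gt0 //.
apply: (@le_trans _ _ (1 / p x)).
  by apply: ler_wpM2r; [rewrite invr_ge0 ltW | exact: dist_le1].
by rewrite mul1r lef_pV2 ?posrE.
Qed.

Lemma KL_ge0 (q p : X -> R) : is_dist X q -> is_dist X p -> (forall x, eps <= p x) ->
  0 <= KL X q p.
Proof.
move=> hq hp hpe; have [e0 e1] := andP heps.
have [hq0 hq1] := hq; have [hp0 hp1] := hp.
have : \sum_x (q x - p x) <= KL X q p.
  rewrite /KL; apply: ler_sum => x _.
  have px : 0 < p x by apply: lt_le_trans (hpe x).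
  have := hq0 x; rewrite le_eqVlt => /orP[/eqP <-|qp]; first by rewrite mul0r sub0r oppr_le0 ltW.
  have pq : 0 < p x / q x by rewrite divr_gt0.
  have h := @le_ln1Dx R (p x / q x - 1) ltac:(lra).
  rewrite addrC subrK in h.
  have hl : ln (q x / p x) = - ln (p x / q x).
    by rewrite -lnV ?posrE ?divr_gt0 // invf_div.
  rewrite hl.
  have : q x * (p x / q x) = p x by rewrite mulrC divfK // lt0r_neq0.
  nra.
by rewrite sumrB hq1 hp1 subrr.
Qed.
Lemma kp_le (k p : R) : 0 <= k <= c -> k * p <= c * Num.max p 0 /\ - (c * Num.max (- p) 0) <= k * p.
Proof.
move=> /andP[k0 kc].
have h1 : p <= Num.max p 0 by rewrite le_max lexx.
have h2 : 0 <= Num.max p 0 by rewrite le_max lexx orbT.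
have h3 : - p <= Num.max (- p) 0 by rewrite le_max lexx.
have h4 : 0 <= Num.max (- p) 0 by rewrite le_max lexx orbT.
have [hp|hp] := leP 0 p; split; nra.
Qed.

Lemma val_bounds {Q : 'I_K -> X -> R} {w : 'I_K -> R} {p : 'rV[R]_m} :
  distK X K Q -> simplexK K w ->
  \sum_(i < m) \sum_(a < K) w a * KL X (Q a) (nu i a) * p ord0 i <= c * \sum_i Num.max (p ord0 i) 0 /\
  - (c * \sum_i Num.max (- p ord0 i) 0) <= \sum_(i < m) \sum_(a < K) w a * KL X (Q a) (nu i a) * p ord0 i.
Proof.
move=> hQ [hw0 hw1].
have hk i : 0 <= \sum_a w a * KL X (Q a) (nu i a) <= c.
  apply/andP; split.
    apply: sumr_ge0 => a _; apply: mulr_ge0 => //; exact: KL_ge0.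
  rewrite -[c]mul1r -hw1 mulr_suml; apply: ler_sum => a _.
  by apply: ler_wpM2l => //; exact: KL_le.
have E i : \sum_(a < K) w a * KL X (Q a) (nu i a) * p ord0 i =
    (\sum_a w a * KL X (Q a) (nu i a)) * p ord0 i by rewrite mulr_suml.
rewrite !mulr_sumr -sumrN; split; apply: ler_sum => i _; rewrite E.
  exact: (kp_le _ (p ord0 i) (hk i)).1.
exact: (kp_le _ (p ord0 i) (hk i)).2.
Qed.

Let a0 : 'I_K := Ordinal hK.
Let w0 : 'I_K -> R := fun a => (a == a0)%:R.
Lemma w0_simplex : simplexK K w0.
Proof.
split; first by move=> a; rewrite /w0 ler0n.
rewrite (bigD1 a0) //= big1 ?addr0 /w0 ?eqxx //.
by move=> a /negbTE ->.
Qed.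
Let i0 : 'I_m := Ordinal (leq_trans (isT : (0 < 2)%N) hm).
Lemma Q0_dist : distK X K (nu i0).
Proof. by move=> a; exact: hnu. Qed.

Lemma sup_bounds (Q : 'I_K -> X -> R) (p : 'rV[R]_m) : distK X K Q ->
  sup [set \sum_(i < m) \sum_(a < K) w a * KL X (Q a) (nu i a) * p ord0 i
                | w in simplexK K] <= c * \sum_i Num.max (p ord0 i) 0 /\
  - (c * \sum_i Num.max (- p ord0 i) 0) <= sup [set \sum_(i < m) \sum_(a < K) w a * KL X (Q a) (nu i a) * p ord0 i
                | w in simplexK K].
Proof.
move=> hQ; set S := [set _ | w in _].
have ne : S !=set0 by exists (\sum_(i < m) \sum_(a < K) w0 a * KL X (Q a) (nu i a) * p ord0 i), w0; last by [] ; exact: w0_simplex.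
have ub : ubound S (c * \sum_i Num.max (p ord0 i) 0).
  by move=> y [w hw <-]; exact: (val_bounds hQ hw).1.
split; first exact: ge_sup.
apply: le_trans (@val_bounds Q w0 p hQ w0_simplex).2 _.
apply: ub_le_sup; first by exists (c * \sum_i Num.max (p ord0 i) 0).
by exists w0 => //; exact: w0_simplex.
Qed.

Lemma Ham_bounds (p : 'rV[R]_m) :
  Ham X K m nu p <= c * \sum_i Num.max (p ord0 i) 0 /\
  - (c * \sum_i Num.max (- p ord0 i) 0) <= Ham X K m nu p.
Proof.
rewrite /Ham; set S := [set _ | Q in _].
have lb : lbound S (- (c * \sum_i Num.max (- p ord0 i) 0)).
  by move=> y [Q hQ <-]; exact: (sup_bounds Q p hQ).2.
split; last by apply: lb_le_inf => //; eexists; exists (nu i0); [exact: Q0_dist | reflexivity].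
apply: le_trans (sup_bounds (nu i0) p Q0_dist).1.
apply: ge_inf; first by exists (- (c * \sum_i Num.max (- p ord0 i) 0)).
by exists (nu i0) => //; exact: Q0_dist.
Qed.
End H.
Section G.
Variables (R : realType) (m : nat) (hm : (2 <= m)%N) (c : R) (hc : 0 < c).
Lemma entG (x : 'rV[R]_m) i : `|x ord0 i| <= `|x|.
Proof. have ->: `|x| = \big[Num.max/0]_ij `|x ij.1 ij.2| by exact: mx_normrE.
exact: (le_bigmax _ _ (ord0, i)). Qed.
Lemma bndG (x : 'rV[R]_m) b : 0 <= b -> (forall i, `|x ord0 i| <= b) -> `|x| <= b.
Proof. have ->: `|x| = \big[Num.max/0]_ij `|x ij.1 ij.2| by exact: mx_normrE.
move=> b0 H; apply: bigmax_le => // -[i j] _ /=; by rewrite (ord1 i). Qed.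

Definition cl (y : R) := Num.min (Num.max y 0) c.
Lemma clE (y : R) : (y <= 0 -> cl y = 0) /\ (c <= y -> cl y = c) /\ (0 <= y <= c -> cl y = y).
Proof.
rewrite /cl; split; [|split].
- move=> h; rewrite (max_idPr h); apply/min_idPl; exact: ltW.
- move=> h; have hc0 := hc; have y0 : 0 <= y by lra.
  rewrite (max_idPl y0).
  exact/min_idPr.
- move=> /andP[h1 h2]; rewrite (max_idPl h1); exact/min_idPl.
Qed.
Lemma clC (y : R) : [\/ y <= 0 /\ cl y = 0, c <= y /\ cl y = c | (0 <= y <= c) /\ cl y = y].
Proof.
have hc0 := hc; have [h1 [h2 h3]] := clE y.
case: (leP y 0) => a1; first by apply: Or31; split => //; exact: h1.
case: (leP c y) => a2; first by apply: Or32; split => //; exact: h2.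
have a3 : 0 <= y <= c by apply/andP; split; lra.
by apply: Or33; split => //; exact: h3.
Qed.
Lemma cl_in (y : R) : 0 <= cl y <= c.
Proof. have hc0 := hc; case: (clC y) => [[h ->]|[h ->]|[h ->]] //; apply/andP; split; lra. Qed.
Lemma le_abs (a b : R) : a <= b -> -a <= b -> `|a| <= b.
Proof. by move=> h1 h2; rewrite ler_norml h1 andbT lerNl. Qed.
Lemma abs_ge (a : R) : a <= `|a| /\ -a <= `|a|.
Proof. by split; [exact: ler_norm | rewrite -normrN; exact: ler_norm]. Qed.
Lemma cl_lip (y z : R) : `|cl y - cl z| <= `|y - z|.
Proof.
have hc0 := hc; have [n1 n2] := abs_ge (y - z).
by case: (clC y) => [[h1 ->]|[h1 ->]|[/andP[h1 h1'] ->]];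
case: (clC z) => [[h2 ->]|[h2 ->]|[/andP[h2 h2'] ->]]; apply: le_abs; lra.
Qed.
Lemma cl_near (y b : R) : 0 <= b <= c -> `|y - cl y| <= `|y - b|.
Proof.
move=> /andP[b1 b2]; have hc0 := hc; have [n1 n2] := abs_ge (y - b).
by case: (clC y) => [[h1 ->]|[h1 ->]|[/andP[h1 h1'] ->]]; apply: le_abs; lra.
Qed.
Lemma cl_half (y : R) : - (c / 2) <= y <= 3 * c / 2 -> `|y - cl y| <= c / 2.
Proof.
move=> /andP[b1 b2]; have hc0 := hc.
by case: (clC y) => [[h1 ->]|[h1 ->]|[/andP[h1 h1'] ->]]; apply: le_abs; lra.
Qed.
Lemma cl_far (y : R) : ~~ (- (c / 2) <= y <= 3 * c / 2) -> c / 2 < `|y - cl y|.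
Proof.
rewrite negb_and -!ltNge => hy; have hc0 := hc; have [n1 n2] := abs_ge (y - cl y).
by case/orP: hy => hy; case: (clC y) => [[h1 h]|[h1 h]|[/andP[h1 h1'] h]];
  rewrite h in n1 n2 *; lra.
Qed.

Implicit Types (x y : 'rV[R]_m).
Let i0 : 'I_m := Ordinal (leq_trans (isT : (0 < 2)%N) hm).
Definition Sj (x : 'rV[R]_m) (j : 'I_m) := [set x ord0 i | i in [set i : 'I_m | i != j]].
Lemma ex_ne (j : 'I_m) : exists i : 'I_m, i != j.
Proof.
have h0 : (0 < m)%N by apply: leq_trans hm.
have h1 : (1 < m)%N by [].
case: (eqVneq j (Ordinal h0)) => hj; last by exists (Ordinal h0); rewrite eq_sym.
by exists (Ordinal h1); rewrite hj.
Qed.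
Lemma Sj_ne x j : Sj x j !=set0.
Proof. have [i hi] := ex_ne j; by exists (x ord0 i), i. Qed.
Lemma Sj_lb x j : lbound (Sj x j) (- `|x|).
Proof. move=> y [i _ <-]; rewrite lerNl; have [_ h] := abs_ge (x ord0 i); apply: le_trans h (entG _ _). Qed.
Lemma infS_le x j i : i != j -> inf (Sj x j) <= x ord0 i.
Proof. move=> hij; apply: ge_inf; first by exists (- `|x|); exact: Sj_lb. by exists i. Qed.
Lemma infS_ge x j (b : R) : (forall i, i != j -> b <= x ord0 i) -> b <= inf (Sj x j).
Proof. move=> H; apply: lb_le_inf; first exact: Sj_ne. by move=> y [i hi <-]; exact: H. Qed.
Definition Gs (x : 'rV[R]_m) := [set inf (Sj x j) | j in [set: 'I_m]].
Lemma gfunE x : gfun m x = sup (Gs x).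
Proof. by []. Qed.
Lemma Gs_ub x : ubound (Gs x) `|x|.
Proof.
move=> y [j _ <-]; have [i hi] := ex_ne j.
apply: le_trans (infS_le x j i hi) _; have [h _] := abs_ge (x ord0 i); exact: le_trans h (entG _ _).
Qed.
Lemma gfun_ge x j : inf (Sj x j) <= gfun m x.
Proof. rewrite gfunE; apply: ub_le_sup; first by exists `|x|; exact: Gs_ub. by exists j. Qed.
Lemma gfun_le x (b : R) : (forall j, inf (Sj x j) <= b) -> gfun m x <= b.
Proof.
move=> H; rewrite gfunE; apply: ge_sup; first by exists (inf (Sj x i0)), i0.
by move=> y [j _ <-]; exact: H.
Qed.
Lemma gfun_lip1 x y : gfun m x <= gfun m y + `|x - y|.
Proof.
apply: gfun_le => j.
have : inf (Sj x j) - `|x - y| <= inf (Sj y j).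
  apply: infS_ge => i hi; have h1 := infS_le x j i hi.
  have h2 := entG (x - y) i; rewrite !mxE in h2.
  have [h3 _] := abs_ge (x ord0 i - y ord0 i).
  lra.
have := gfun_ge y j; lra.
Qed.
Lemma gfun_lip x y : `|gfun m x - gfun m y| <= `|x - y|.
Proof.
have h1 := gfun_lip1 x y; have h2 := gfun_lip1 y x; rewrite distrC in h2.
apply: le_abs; lra.
Qed.
Lemma gfun_cube x : (forall i, 0 <= x ord0 i <= c) -> 0 <= gfun m x <= c.
Proof.
move=> H; apply/andP; split.
  apply: le_trans (gfun_ge x i0); apply: infS_ge => i _; by case/andP: (H i).
apply: gfun_le => j; have [i hi] := ex_ne j; apply: le_trans (infS_le x j i hi) _.
by case/andP: (H i).
Qed.
Lemma projE x i : projC m c x ord0 i = cl (x ord0 i).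
Proof. by rewrite mxE. Qed.
Lemma proj_cube x : cubeC m c (projC m c x).
Proof. move=> i; rewrite projE; exact: cl_in. Qed.
Lemma dinfE x : dinf m c x = `|x - projC m c x|.
Proof.
rewrite /dinf; apply/eqP; rewrite eq_le; apply/andP; split.
  apply: ge_inf; first by exists 0 => y [z _ <-].
  by exists (projC m c x) => //; exact: proj_cube.
apply: lb_le_inf; first by exists `|x - projC m c x|, (projC m c x) => //; exact: proj_cube.
move=> y [z hz <-]; apply: bndG => // i; rewrite !mxE.
have := cl_near (x ord0 i) (z ord0 i) (hz i); rewrite /cl => h; apply: le_trans h _.
by have := entG (x - z) i; rewrite !mxE.
Qed.
Lemma proj_lip x y : `|projC m c x - projC m c y| <= `|x - y|.
Proof.
apply: bndG => // i; rewrite !mxE; have := cl_lip (x ord0 i) (y ord0 i); rewrite /cl => h; apply: le_trans h _.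
by have := entG (x - y) i; rewrite !mxE.
Qed.
Lemma dinf_lip x y : `|dinf m c x - dinf m c y| <= 2 * `|x - y|.
Proof.
rewrite !dinfE; apply: le_trans (ler_dist_dist _ _) _.
rewrite (_ : _ - _ = (x - y) - (projC m c x - projC m c y)); last by rewrite !opprD !opprK addrACA.
apply: le_trans (ler_normB _ _) _; have := proj_lip x y; lra.
Qed.
Lemma dinf_ge0 x : 0 <= dinf m c x.
Proof. by rewrite dinfE. Qed.
Lemma dinf_half x : in_cube_half m c x -> dinf m c x <= c / 2.
Proof.
move/forallP => H; rewrite dinfE; have hc0 := hc; apply: bndG; first lra.
move=> i; rewrite !mxE; have := cl_half (x ord0 i) (H i); by rewrite /cl.
Qed.
Lemma dinf_far x : ~~ in_cube_half m c x -> c / 2 < dinf m c x.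
Proof.
rewrite negb_forall => /existsP[i hi]; rewrite dinfE.
have := cl_far (x ord0 i) hi; rewrite /cl => h; apply: lt_le_trans h _.
by have := entG (x - projC m c x) i; rewrite !mxE.
Qed.
Lemma F_bounds (d : R) : 0 <= d <= c / 2 -> 0 <= 1 - 2 * d / c <= 1.
Proof.
move=> /andP[d0 d1]; have hc0 := hc.
have e : 2 * d / c * c = 2 * d by rewrite divfK // lt0r_neq0.
have h : 0 <= 2 * d / c by rewrite divr_ge0 // ?mulr_ge0 // ltW.
apply/andP; split; nra.
Qed.
Lemma gp_in x : in_cube_half m c x ->
  gprime m c x = gfun m (projC m c x) * (1 - 2 * dinf m c x / c).
Proof. by rewrite /gprime => ->. Qed.
Lemma gp_out x : ~~ in_cube_half m c x -> gprime m c x = 0.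
Proof. by rewrite /gprime => /negbTE ->. Qed.
Lemma gpx_bounds x : in_cube_half m c x ->
  (0 <= gfun m (projC m c x) <= c) /\ 0 <= 1 - 2 * dinf m c x / c <= 1.
Proof.
move=> h; split; first by apply: gfun_cube => i; exact: proj_cube.
by apply: F_bounds; rewrite dinf_ge0 (dinf_half x h).
Qed.
Lemma gp_bound x : `|gprime m c x| <= c.
Proof.
have hc0 := hc.
case: (boolP (in_cube_half m c x)) => h; last by rewrite gp_out // normr0 ltW.
rewrite gp_in //; have [/andP[g0 g1] /andP[f0 f1]] := gpx_bounds x h.
apply: le_abs; nra.
Qed.
Lemma gp_lip x y : `|gprime m c x - gprime m c y| <= 5 * `|x - y|.
Proof.
have hc0 := hc.
have L0 : 0 <= `|x - y| by [].
have hg := gfun_lip (projC m c x) (projC m c y).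
have hp := proj_lip x y.
have hd := dinf_lip x y.
have [a1 a2] := abs_ge (gfun m (projC m c x) - gfun m (projC m c y)).
have [b1 b2] := abs_ge (dinf m c x - dinf m c y).
case: (boolP (in_cube_half m c x)) => hx; case: (boolP (in_cube_half m c y)) => hy.
- rewrite !gp_in //.
  have [/andP[g0 g1] /andP[f0 f1]] := gpx_bounds x hx.
  have [/andP[g0' g1'] /andP[f0' f1']] := gpx_bounds y hy.
  set gx := gfun m _ in g0 g1 a1 a2 hg *; set gy := gfun m _ in g0' g1' a1 a2 hg *.
  set dx := dinf m c x in b1 b2 hd f0 f1 *; set dy := dinf m c y in b1 b2 hd f0' f1' *.
  pose u := gy / c.
  have u0 : 0 <= u by rewrite /u divr_ge0 // ltW.
  have u1 : u <= 1 by rewrite /u ler_pdivrMr // mul1r.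
  have E : gx * (1 - 2 * dx / c) - gy * (1 - 2 * dy / c) =
     (gx - gy) * (1 - 2 * dx / c) + 2 * u * (dy - dx).
    by rewrite /u; field; rewrite lt0r_neq0.
  rewrite E; set F := 1 - 2 * dx / c in f0 f1 E *.
  apply: le_abs; nra.
- rewrite gp_in // (gp_out y hy) subr0.
  have [/andP[g0 g1] /andP[f0 f1]] := gpx_bounds x hx.
  have hf := dinf_far y hy.
  have e : 2 * dinf m c x / c * c = 2 * dinf m c x by rewrite divfK // lt0r_neq0.
  apply: le_abs; nra.
- rewrite (gp_out x hx) gp_in // sub0r normrN.
  have [/andP[g0 g1] /andP[f0 f1]] := gpx_bounds y hy.
  have hf := dinf_far x hx.
  have e : 2 * dinf m c y / c * c = 2 * dinf m c y by rewrite divfK // lt0r_neq0.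
  apply: le_abs; nra.
- by rewrite (gp_out x hx) (gp_out y hy) subr0 normr0 mulr_ge0.
Qed.
Lemma gp_C x : cubeC m c x -> gprime m c x = gfun m x.
Proof.
have hc0 := hc.
move=> hx; have hP : projC m c x = x.
  apply/rowP => i; rewrite projE; have [_ [_ h]] := clE (x ord0 i); exact: h.
have hh : in_cube_half m c x.
  by apply/forallP => i; have /andP[h1 h2] := hx i; apply/andP; split; lra.
by rewrite gp_in // dinfE hP subrr normr0 mulr0 mul0r subr0 mulr1.
Qed.
Lemma gp_supp : compact (closure [set x | gprime m c x != 0]).
Proof.
pose Bi := fun i : 'I_m => `[- (c / 2), 3 * c / 2]%classic.
pose B := [set v : 'rV[R]_m | forall i, Bi i (v ord0 i)].
have cB : compact B by apply: rV_compact => i; exact: segment_compact.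
have clB : closed B by apply: compact_closed => //; exact: norm_hausdorff.
have sub : [set x | gprime m c x != 0] `<=` B.
  move=> x /= hx; case: (boolP (in_cube_half m c x)) => h; last by rewrite gp_out // eqxx in hx.
  move=> i; move/forallP: h => /(_ i); by rewrite /Bi /= in_itv.
apply: (subclosed_compact (@closed_closure _ _) cB).
move=> x /(closureS sub); by rewrite -((closure_id B).1 clB).
Qed.
End G.


Theorem mainTheorem8 (R : realType) (X : finType) (K m : nat)
  (hm : (2 <= m)%N) (hK : (0 < K)%N) (eps : R) (heps : 0 < eps < 1)
  (nu : 'I_m -> 'I_K -> X -> R)
  (hnu : forall i a, is_dist X (nu i a))
  (hnueps : forall i a x, eps <= nu i a x) :
  let c := ln (eps^-1) in
  let g' := gprime m c in
  ((exists M : R, forall x, `|g' x| <= M) /\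
   (exists L : R, forall x y, `|g' x - g' y| <= L * `|x - y|) /\
   compact (closure [set x | g' x != 0]) /\
   (forall x, cubeC m c x -> g' x = gfun m x)) /\
  (forall V : 'rV[R]_m -> R -> R,
     viscosity_solution m (Ham X K m nu) g' V ->
     forall (x : 'rV[R]_m) (t : R), 0 <= t <= 1 ->
       ~~ [forall i, (- (3 * c / 2) <= x ord0 i <= 3 * c / 2)] ->
       V x t = 0).
Proof.
move=> c g'.
have [e0 e1] := andP heps.
have hc : 0 < c.
  rewrite /c; apply: ln_gt0; rewrite invf_gt1 //.
split.
  split; first by exists c => x; exact: gp_bound.
  split; first by exists 5 => x y; exact: gp_lip.
  split; first exact: gp_supp.
  by move=> x hx; exact: gp_C.
move=> V [Vcont [Vterm [Vsub Vsup]]] x t /andP[t0 t1].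
rewrite negb_forall => /existsP[k hk].
have gz : forall y : 'rV[R]_m, (y ord0 k < -(c/2) \/ 3 * c / 2 < y ord0 k) -> g' y = 0.
  move=> y hy; apply: gp_out; rewrite negb_forall; apply/existsP; exists k.
  by rewrite negb_and -!ltNge; case: hy => ->; rewrite ?orbT.
have [rho0 [r0 hr]] : exists rho0, 0 < rho0 /\ forall y : 'rV[R]_m,
    x ord0 k - rho0 < y ord0 k < x ord0 k + c + rho0 -> g' y = 0.
  move: hk; rewrite negb_and -!ltNge => /orP[h|h].
  - exists (- (3 * c / 2) - x ord0 k); split; first lra.
    move=> y /andP[y1 y2]; apply: gz; left; lra.
  - exists (x ord0 k - 3 * c / 2); split; first lra.
    move=> y /andP[y1 y2]; apply: gz; right; lra.
have Hup s : 0 < s < 1 -> V x s <= 0.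
  move=> hs.
  apply: (@compare R m c hc (Ham X K m nu)
     (fun p => (@Ham_bounds R X K m hm hK eps heps nu hnu hnueps p).1) V Vcont Vsub x s hs k rho0 r0).
  by move=> y hy; rewrite Vterm hr.
have Hlo s : 0 < s < 1 -> - V x s <= 0.
  move=> hs.
  apply: (@compare R m c hc (fun p => - Ham X K m nu (- p)) _ (fun y s => - V y s) _ _ x s hs k rho0 r0).
  - move=> p; have [_ h] := @Ham_bounds R X K m hm hK eps heps nu hnu hnueps (- p).
    move: h; under eq_bigr do rewrite mxE opprK.
    move=> h; rewrite -/c in h *; lra.
  - move=> z; exact: (continuousN (Vcont z)).
  - move=> phi z0 dphi hz0 hnear.
    have dN : forall z, differentiable (- phi) z := fun z => differentiableN (dphi z).
    have hD : 'd (- phi) z0 = - ('d phi z0 : _ -> R) :> (_ -> R) by rewrite diffN.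
    have := Vsup (- phi) z0 dN hz0.
    have hn : \forall z \near z0, V z.1 z.2 - (- phi) z >= V z0.1 z0.2 - (- phi) z0.
      by apply: filterS hnear => z; rewrite !fctE; lra.
    move=> /(_ hn).
    have hg : grad_x m (- phi) z0 = - grad_x m phi z0.
      by apply/rowP => i; rewrite !mxE hD.
    rewrite hg /d_t hD /= => h.
    have e : (- ('d phi z0 : _ -> R)) (0, 1) = - ('d phi z0 (0, 1)) by [].
    rewrite e in h; lra.
  - by move=> y hy; rewrite Vterm hr // oppr0.
have Hint s : 0 < s < 1 -> V x s = 0.
  by move=> hs; have := Hup s hs; have := Hlo s hs; lra.
case: (ltrP 0 t) => ht0.
  case: (ltrP t 1) => ht1; first by apply: Hint; apply/andP.
  have -> : t = 1 by lra.
  by rewrite Vterm hr //; apply/andP; split; lra.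
have -> : t = 0 by lra.
apply/eqP/negPn/negP => hne.
have ep : 0 < `|V x 0| by rewrite normr_gt0.
have Hc := (subspace_continuousP _ _).1 Vcont (x, 0) (ltac:(by rewrite /= lexx ler01)).
have := cvgr_dist_lt _ _ Hc _ ep.
move=> /(_ (within_filter _ _)); rewrite near_withinE => /nbhs_normP [d d0' hd].
have d0 : 0 < d := d0'.
pose s := Num.min (d / 2) (1 / 2).
have s0 : 0 < s by rewrite /s lt_min; apply/andP; split; lra.
have s1 : s <= 1 / 2 by rewrite /s ge_min lexx orbT.
have s2 : s <= d / 2 by rewrite /s ge_min lexx.
have := hd (x, s).
have hb : ball_ Num.Def.normr (x, 0) d (x, s).
  rewrite /ball_ /= prod_normE /= subrr normr0 sub0r normrN gtr0_norm //.
  rewrite gt_max; apply/andP; split; lra.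
move=> /(_ hb) /(_ (ltac:(rewrite /=; apply/andP; split; lra))) /=.
change (`|V x 0 - V x s| < `|V x 0| -> False).
rewrite (Hint s) ?subr0; first by rewrite ltxx.
apply/andP; split; lra.
Qed.
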